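(* Let $\gamma\colon I\to\mathbb R^3$ be a curve parametrized by arc-length whose curvature is a nonzero constant $\kappa_0$, and suppose there exist $a_0,a_1\in\mathbb R$ with $a_1>0$ such that $|\gamma(s)|^2=(s+a_0)^2+a_1^2$ for all $s\in I$. Then there exists $q\in\mathbb R$, $q\neq0$, such that $\gamma''=q\,\gamma\times\gamma'$, i.e. $\gamma$ is a conformal trajectory of the radial vector field $V(x,y,z)=x\partial_x+y\partial_y+z\partial_z$.
   Context: $\times$ denotes the usual cross product of $\mathbb R^3$ and $|\cdot|$ the Euclidean norm. For a fixed real $q\neq0$, a conformal trajectory of a conformal vector field $V$ on $\mathbb R^3$ is a regular curve with $\gamma''=q\,V(\gamma)\times\gamma'$. *)

(* Defs.v *)
From Stdlib Require Import Reals.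
From Coquelicot Require Import Coquelicot.
Open Scope R_scope.

Definition R3 := (R * R * R)%type.
Definition mkR3 (x y z : R) : R3 := (x, y, z).
Definition v1 (v : R3) : R := fst (fst v).
Definition v2 (v : R3) : R := snd (fst v).
Definition v3 (v : R3) : R := snd v.
Definition dot (u v : R3) : R := v1 u * v1 v + v2 u * v2 v + v3 u * v3 v.
Definition norm3 (u : R3) : R := sqrt (dot u u).
Definition cross (u v : R3) : R3 :=
  mkR3 (v2 u * v3 v - v3 u * v2 v)
       (v3 u * v1 v - v1 u * v3 v)
       (v1 u * v2 v - v2 u * v1 v).
Definition scal3 (c : R) (u : R3) : R3 := mkR3 (c * v1 u) (c * v2 u) (c * v3 u).

Definition in_interval (a b : Rbar) (s : R) : Prop := Rbar_lt a s /\ Rbar_lt s b.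

Definition dcurve (k : nat) (g : R -> R3) (s : R) : R3 :=
  mkR3 (Derive_n (fun t => v1 (g t)) k s)
       (Derive_n (fun t => v2 (g t)) k s)
       (Derive_n (fun t => v3 (g t)) k s).

Definition smooth_on (a b : Rbar) (g : R -> R3) : Prop :=
  forall (n : nat) (s : R), in_interval a b s ->
    ex_derive_n (fun t => v1 (g t)) n s /\
    ex_derive_n (fun t => v2 (g t)) n s /\
    ex_derive_n (fun t => v3 (g t)) n s.

Definition arclength_param (a b : Rbar) (g : R -> R3) : Prop :=
  forall s, in_interval a b s -> norm3 (dcurve 1 g s) = 1.

Definition curvature (g : R -> R3) (s : R) : R :=
  norm3 (cross (dcurve 1 g s) (dcurve 2 g s)) / (norm3 (dcurve 1 g s)) ^ 3.

(* Main.v *)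
Require Import Defs.
From Stdlib Require Import Reals Lra Classical.
From Coquelicot Require Import Coquelicot.
Open Scope R_scope.

Ltac fixD :=
  repeat match goal with
  | H : is_derive ?f ?s ?d |- context [Derive (fun x => ?f x) ?s] =>
      replace (Derive (fun x => f x) s) with d by (symmetry; apply is_derive_unique; exact H)
  end.
Lemma der_dot (u1 u2 u3 w1 w2 w3 : R -> R) du1 du2 du3 dw1 dw2 dw3 s :
 is_derive u1 s du1 -> is_derive u2 s du2 -> is_derive u3 s du3 ->
 is_derive w1 s dw1 -> is_derive w2 s dw2 -> is_derive w3 s dw3 ->
 is_derive (fun t => u1 t * w1 t + u2 t * w2 t + u3 t * w3 t) s
   (du1 * w1 s + u1 s * dw1 + (du2 * w2 s + u2 s * dw2) + (du3 * w3 s + u3 s * dw3)).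
Proof.
intros H1 H2 H3 H4 H5 H6.
auto_derive.
- repeat split; eexists; eassumption.
- fixD. ring.
Qed.
Definition det3 (u1 u2 u3 v1 v2 v3 w1 w2 w3 : R) :=
  u1 * (v2 * w3 - v3 * w2) + u2 * (v3 * w1 - v1 * w3) + u3 * (v1 * w2 - v2 * w1).
Lemma der_det (u1 u2 u3 v1 v2 v3 w1 w2 w3 : R -> R) du1 du2 du3 dv1 dv2 dv3 dw1 dw2 dw3 s :
 is_derive u1 s du1 -> is_derive u2 s du2 -> is_derive u3 s du3 ->
 is_derive v1 s dv1 -> is_derive v2 s dv2 -> is_derive v3 s dv3 ->
 is_derive w1 s dw1 -> is_derive w2 s dw2 -> is_derive w3 s dw3 ->
 is_derive (fun t => det3 (u1 t) (u2 t) (u3 t) (v1 t) (v2 t) (v3 t) (w1 t) (w2 t) (w3 t)) s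
   (det3 du1 du2 du3 (v1 s) (v2 s) (v3 s) (w1 s) (w2 s) (w3 s)
    + det3 (u1 s) (u2 s) (u3 s) dv1 dv2 dv3 (w1 s) (w2 s) (w3 s)
    + det3 (u1 s) (u2 s) (u3 s) (v1 s) (v2 s) (v3 s) dw1 dw2 dw3).
Proof.
intros. unfold det3.
auto_derive.
- repeat split; eexists; eassumption.
- fixD. ring.
Qed.

Lemma sq_der (P : R -> R) d s : is_derive P s d ->
  is_derive (fun t => P t * P t) s (2 * P s * d).
Proof. intros H. auto_derive. - repeat split; eexists; eassumption. - fixD. ring. Qed.

Lemma interval_loc a b s : in_interval a b s -> locally s (in_interval a b).
Proof.
intros H. apply (open_and _ _ (open_Rbar_gt a) (open_Rbar_lt b)). exact H.
Qed.

Lemma loc_eq a b (F G : R -> R) (d e s : R) : in_interval a b s -> is_derive F s d -> is_derive G s e ->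
  (forall t, in_interval a b t -> F t = G t) -> d = e.
Proof.
intros Hs HF HG Heq.
assert (HF' : is_derive G s d).
{ apply (is_derive_ext_loc F G); [|exact HF].
  generalize (interval_loc a b s Hs). apply filter_imp. intros t Ht. apply Heq; exact Ht. }
apply (is_derive_unique G s d) in HF'. apply is_derive_unique in HG. congruence.
Qed.

Lemma interval_convex a b s1 s2 x : in_interval a b s1 -> in_interval a b s2 ->
  Rmin s1 s2 <= x <= Rmax s1 s2 -> in_interval a b x.
Proof.
intros [H1 H2] [H3 H4] Hx.
assert (A : s1 <= x \/ s2 <= x) by (unfold Rmin in Hx; destruct Rle_dec; lra).
assert (B : x <= s1 \/ x <= s2) by (unfold Rmax in Hx; destruct Rle_dec; lra).
split.
- destruct A as [A|A]; [apply Rbar_lt_le_trans with s1 | apply Rbar_lt_le_trans with s2];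
  auto; simpl; lra.
- destruct B as [B|B]; [apply Rbar_le_lt_trans with s1 | apply Rbar_le_lt_trans with s2];
  auto; simpl; lra.
Qed.

Lemma alg (x0 y0 z0 x1 y1 z1 x2 y2 z2 A k c : R) : 0 < A ->
  x1*x1+y1*y1+z1*z1 = 1 ->
  x0*x1+y0*y1+z0*z1 = c ->
  x0*x0+y0*y0+z0*z0 = c^2 + A^2 ->
  x0*x2+y0*y2+z0*z2 = 0 ->
  x1*x2+y1*y2+z1*z2 = 0 ->
  x2*x2+y2*y2+z2*z2 = k^2 ->
  let p := det3 x0 y0 z0 x1 y1 z1 x2 y2 z2 in
  p * p = k^2 * A^2 /\
  x2 = p / A^2 * (y0*z1 - z0*y1) /\
  y2 = p / A^2 * (z0*x1 - x0*z1) /\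
  z2 = p / A^2 * (x0*y1 - y0*x1).
Proof.
intros HA h1 h2 h3 h4 h5 h6 p.
set (C1 := y0*z1 - z0*y1). set (C2 := z0*x1 - x0*z1). set (C3 := x0*y1 - y0*x1).
assert (HCC : C1*C1+C2*C2+C3*C3 = A^2).
{ assert (E : C1*C1+C2*C2+C3*C3 = (x0*x0+y0*y0+z0*z0)*(x1*x1+y1*y1+z1*z1)
     - (x0*x1+y0*y1+z0*z1)^2) by (unfold C1, C2, C3; ring).
  rewrite E, h1, h2, h3. ring. }
assert (Hp : p = x2*C1+y2*C2+z2*C3) by (unfold p, det3, C1, C2, C3; ring).
set (D1 := y2*C3 - z2*C2). set (D2 := z2*C1 - x2*C3). set (D3 := x2*C2 - y2*C1).
assert (L : p*p + (D1*D1+D2*D2+D3*D3) = (x2*x2+y2*y2+z2*z2)*(C1*C1+C2*C2+C3*C3))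
  by (rewrite Hp; unfold D1, D2, D3; ring).
assert (ED1 : D1 = x0*(x1*x2+y1*y2+z1*z2) - x1*(x0*x2+y0*y2+z0*z2))
  by (unfold D1, C2, C3; ring).
assert (ED2 : D2 = y0*(x1*x2+y1*y2+z1*z2) - y1*(x0*x2+y0*y2+z0*z2))
  by (unfold D2, C1, C3; ring).
assert (ED3 : D3 = z0*(x1*x2+y1*y2+z1*z2) - z1*(x0*x2+y0*y2+z0*z2))
  by (unfold D3, C1, C2; ring).
rewrite h4, h5 in ED1, ED2, ED3.
assert (Hpp : p*p = k^2*A^2).
{ rewrite h6, HCC in L. rewrite ED1, ED2, ED3 in L. lra. }
assert (HA2 : A^2 <> 0) by (apply pow_nonzero; lra).
clearbody D1 D2 D3 C1 C2 C3 p.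
set (q := p / A^2).
assert (S : (x2 - q*C1)^2 + (y2 - q*C2)^2 + (z2 - q*C3)^2 = 0).
{ replace ((x2 - q*C1)^2 + (y2 - q*C2)^2 + (z2 - q*C3)^2) with
    ((x2*x2+y2*y2+z2*z2) - 2*q*(x2*C1+y2*C2+z2*C3) + q^2*(C1*C1+C2*C2+C3*C3)) by ring.
  rewrite <- Hp, h6, HCC. unfold q.
  replace (k ^ 2 - 2 * (p / A ^ 2) * p + (p / A ^ 2) ^ 2 * A ^ 2) with ((k^2*A^2 - p*p)/A^2)
    by (field; lra).
  rewrite Hpp. unfold Rdiv. ring. }
assert (T1 : 0 <= (x2 - q*C1)^2) by apply pow2_ge_0.
assert (T2 : 0 <= (y2 - q*C2)^2) by apply pow2_ge_0.
assert (T3 : 0 <= (z2 - q*C3)^2) by apply pow2_ge_0.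
assert (Z1 : (x2 - q*C1)^2 = 0) by lra.
assert (Z2 : (y2 - q*C2)^2 = 0) by lra.
assert (Z3 : (z2 - q*C3)^2 = 0) by lra.
assert (W1 : x2 - q*C1 = 0) by nra.
assert (W2 : y2 - q*C2 = 0) by nra.
assert (W3 : z2 - q*C3 = 0) by nra.
repeat split; [exact Hpp| | | ]; lra.
Qed.

Definition cx (g : R -> R3) k := Derive_n (fun t => v1 (g t)) k.
Definition cy (g : R -> R3) k := Derive_n (fun t => v2 (g t)) k.
Definition cz (g : R -> R3) k := Derive_n (fun t => v3 (g t)) k.

Lemma hder a b g k s : smooth_on a b g -> in_interval a b s ->
  is_derive (cx g k) s (cx g (S k) s) /\ is_derive (cy g k) s (cy g (S k) s) /\
  is_derive (cz g k) s (cz g (S k) s).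
Proof.
intros Hsm Hs. destruct (Hsm (S k) s Hs) as [H1 [H2 H3]].
split; [|split]; apply Derive_correct; assumption.
Qed.

Lemma sqrt_eq_sq d k : 0 <= d -> sqrt d = k -> d = k ^ 2.
Proof. intros H E. rewrite <- E. rewrite pow2_sqrt; auto. Qed.

Lemma dot_ge0 u : 0 <= dot u u.
Proof. unfold dot. nra. Qed.

Theorem mainTheorem5 (a b : Rbar) (g : R -> R3) (kappa0 a0 a1 : R) :
  Rbar_lt a b ->
  smooth_on a b g ->
  arclength_param a b g ->
  kappa0 <> 0 ->
  (forall s, in_interval a b s -> curvature g s = kappa0) ->
  0 < a1 ->
  (forall s, in_interval a b s -> (norm3 (g s)) ^ 2 = (s + a0) ^ 2 + a1 ^ 2) ->
  exists q : R, q <> 0 /\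
    forall s, in_interval a b s ->
      dcurve 2 g s = scal3 q (cross (g s) (dcurve 1 g s)).
Proof.
intros Hab Hsm Har Hk0 Hcurv Ha1 Hnorm.

assert (U : forall t, in_interval a b t -> cx g 1%nat t * cx g 1%nat t + cy g 1%nat t * cy g 1%nat t + cz g 1%nat t * cz g 1%nat t = 1).
{ intros t Ht. generalize (Har t Ht). unfold norm3. intro E.
  apply sqrt_eq_sq in E; [|apply dot_ge0].
  assert (E' : cx g 1%nat t * cx g 1%nat t + cy g 1%nat t * cy g 1%nat t + cz g 1%nat t * cz g 1%nat t = dot (dcurve 1 g t) (dcurve 1 g t)) by reflexivity.
  rewrite E', E. ring. }
assert (N0 : forall t, in_interval a b t -> cx g 0%nat t * cx g 0%nat t + cy g 0%nat t * cy g 0%nat t + cz g 0%nat t * cz g 0%nat t = (t+a0)^2 + a1^2).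
{ intros t Ht. generalize (Hnorm t Ht). unfold norm3. rewrite pow2_sqrt by apply dot_ge0.
  intro E. exact E. }
assert (G1 : forall s, in_interval a b s -> cx g 0%nat s * cx g 1%nat s + cy g 0%nat s * cy g 1%nat s + cz g 0%nat s * cz g 1%nat s = s + a0).
{ intros s Hs.
  destruct (hder a b g 0 s Hsm Hs) as [D0x [D0y D0z]].
  assert (E1 := loc_eq a b _ (fun t => (t+a0)^2 + a1^2) _ (2*(s+a0)) s Hs
     (der_dot _ _ _ _ _ _ _ _ _ _ _ _ s D0x D0y D0z D0x D0y D0z)).
  specialize (E1 ltac:(auto_derive; auto; ring) N0).
  lra. }
assert (G2 : forall s, in_interval a b s -> cx g 0%nat s * cx g 2%nat s + cy g 0%nat s * cy g 2%nat s + cz g 0%nat s * cz g 2%nat s = 0).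
{ intros s Hs.
  destruct (hder a b g 0 s Hsm Hs) as [D0x [D0y D0z]].
  destruct (hder a b g 1 s Hsm Hs) as [D1x [D1y D1z]].
  assert (E2 := loc_eq a b _ (fun t => t + a0) _ 1 s Hs
     (der_dot _ _ _ _ _ _ _ _ _ _ _ _ s D0x D0y D0z D1x D1y D1z)).
  specialize (E2 ltac:(auto_derive; auto; ring) G1).
  generalize (U s Hs). nra. }
assert (G3 : forall s, in_interval a b s -> cx g 1%nat s * cx g 2%nat s + cy g 1%nat s * cy g 2%nat s + cz g 1%nat s * cz g 2%nat s = 0).
{ intros s Hs.
  destruct (hder a b g 1 s Hsm Hs) as [D1x [D1y D1z]].
  assert (E3 := loc_eq a b _ (fun t => 1) _ 0 s Hs
     (der_dot _ _ _ _ _ _ _ _ _ _ _ _ s D1x D1y D1z D1x D1y D1z)).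
  specialize (E3 ltac:(auto_derive; auto; ring) U).
  nra. }
assert (G4 : forall s, in_interval a b s -> cx g 2%nat s * cx g 2%nat s + cy g 2%nat s * cy g 2%nat s + cz g 2%nat s * cz g 2%nat s = kappa0^2).
{ intros s Hs. generalize (Hcurv s Hs). unfold curvature. rewrite (Har s Hs).
  replace (1 ^ 3) with 1 by ring. rewrite Rdiv_1_r. unfold norm3. intro E.
  apply sqrt_eq_sq in E; [|apply dot_ge0].
  assert (E' : dot (cross (dcurve 1 g s) (dcurve 2 g s)) (cross (dcurve 1 g s) (dcurve 2 g s))
     = (cx g 1%nat s * cx g 1%nat s + cy g 1%nat s * cy g 1%nat s + cz g 1%nat s * cz g 1%nat s) * (cx g 2%nat s * cx g 2%nat s + cy g 2%nat s * cy g 2%nat s + cz g 2%nat s * cz g 2%nat s)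
       - (cx g 1%nat s * cx g 2%nat s + cy g 1%nat s * cy g 2%nat s + cz g 1%nat s * cz g 2%nat s)^2).
  { change (dcurve 1 g s) with (mkR3 (cx g 1 s) (cy g 1 s) (cz g 1 s)).
    change (dcurve 2 g s) with (mkR3 (cx g 2 s) (cy g 2 s) (cz g 2 s)).
    unfold dot, cross, v1, v2, v3, mkR3. simpl fst. simpl snd. ring. }
  rewrite E', (U s Hs), (G3 s Hs) in E. lra. }
assert (ALG : forall s, in_interval a b s ->
  let p := det3 (cx g 0 s) (cy g 0 s) (cz g 0 s) (cx g 1 s) (cy g 1 s) (cz g 1 s)
                (cx g 2 s) (cy g 2 s) (cz g 2 s) in
  p * p = kappa0^2 * a1^2 /\
  cx g 2 s = p / a1^2 * (cy g 0 s * cz g 1 s - cz g 0 s * cy g 1 s) /\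
  cy g 2 s = p / a1^2 * (cz g 0 s * cx g 1 s - cx g 0 s * cz g 1 s) /\
  cz g 2 s = p / a1^2 * (cx g 0 s * cy g 1 s - cy g 0 s * cx g 1 s)).
{ intros s Hs. apply (alg _ _ _ _ _ _ _ _ _ a1 kappa0 (s + a0)); auto; rewrite (N0 s Hs); ring.
  }
set (P := fun t => det3 (cx g 0 t) (cy g 0 t) (cz g 0 t) (cx g 1 t) (cy g 1 t) (cz g 1 t)
                (cx g 2 t) (cy g 2 t) (cz g 2 t)).
set (DP := fun s => det3 (cx g 1 s) (cy g 1 s) (cz g 1 s) (cx g 1 s) (cy g 1 s) (cz g 1 s) (cx g 2 s) (cy g 2 s) (cz g 2 s)
    + det3 (cx g 0 s) (cy g 0 s) (cz g 0 s) (cx g 2 s) (cy g 2 s) (cz g 2 s) (cx g 2 s) (cy g 2 s) (cz g 2 s)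
    + det3 (cx g 0 s) (cy g 0 s) (cz g 0 s) (cx g 1 s) (cy g 1 s) (cz g 1 s) (cx g 3 s) (cy g 3 s) (cz g 3 s)).
assert (HP : forall s, in_interval a b s -> is_derive P s (DP s)).
{ intros s Hs.
  destruct (hder a b g 0 s Hsm Hs) as [D0x [D0y D0z]].
  destruct (hder a b g 1 s Hsm Hs) as [D1x [D1y D1z]].
  destruct (hder a b g 2 s Hsm Hs) as [D2x [D2y D2z]].
  exact (der_det _ _ _ _ _ _ _ _ _ _ _ _ _ _ _ _ _ _ s D0x D0y D0z D1x D1y D1z D2x D2y D2z). }
assert (HDP : forall s, in_interval a b s -> DP s = 0).
{ intros s Hs.
  assert (E := loc_eq a b _ (fun t => kappa0^2 * a1^2) _ 0 s Hs (sq_der P _ s (HP s Hs))).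
  specialize (E ltac:(auto_derive; auto; ring)).
  specialize (E (fun t Ht => proj1 (ALG t Ht))).
  assert (Hp : P s * P s = kappa0^2 * a1^2) by exact (proj1 (ALG s Hs)).
  assert (Hpos : 0 < kappa0^2 * a1^2).
  { assert (0 < kappa0 * kappa0) by (apply Rsqr_pos_lt; exact Hk0).
    replace (kappa0^2 * a1^2) with ((kappa0*kappa0)*(a1*a1)) by ring.
    apply Rmult_lt_0_compat; nra. }
  assert (Hp0 : P s <> 0) by (intro Z; rewrite Z in Hp; lra).
  apply (Rmult_eq_reg_l (2 * P s)); [|apply Rmult_integral_contrapositive; split; lra].
  rewrite E. ring. }
destruct (classic (exists s0, in_interval a b s0)) as [[s0 Hs0] | Hno].
2: { exists 1. split; [lra|]. intros s Hs. exfalso. apply Hno. exists s; exact Hs. }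
exists (P s0 / a1^2). split.
{ assert (Hp := proj1 (ALG s0 Hs0)). fold (P s0) in Hp.
  assert (Hpos : 0 < kappa0 * kappa0) by (apply Rsqr_pos_lt; exact Hk0).
  intro Z. assert (P s0 = 0).
  { apply (Rmult_eq_reg_r (/ a1^2)). rewrite Rmult_0_l. exact Z.
    apply Rinv_neq_0_compat. apply pow_nonzero. lra. }
  rewrite H in Hp. assert (0 < a1 * a1) by nra.
  replace (kappa0^2 * a1^2) with ((kappa0*kappa0)*(a1*a1)) in Hp by ring.
  assert (0 < (kappa0*kappa0)*(a1*a1)) by (apply Rmult_lt_0_compat; lra). lra. }
intros s Hs.
assert (Eq : P s = P s0).
{ destruct (MVT_gen P s0 s DP) as [c [Hc E]].
  - intros x Hx. apply HP. apply (interval_convex a b s0 s); auto. lra.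
  - intros x Hx. apply continuity_pt_filterlim. apply (@ex_derive_continuous R_AbsRing R_NormedModule).
    eexists. apply HP. apply (interval_convex a b s0 s); auto.
  - rewrite HDP in E. lra. apply (interval_convex a b s0 s); auto. }
destruct (ALG s Hs) as [_ [A1 [A2 A3]]]. fold (P s) in A1, A2, A3. rewrite Eq in A1, A2, A3.
change (dcurve 2 g s) with (mkR3 (cx g 2 s) (cy g 2 s) (cz g 2 s)).
change (dcurve 1 g s) with (mkR3 (cx g 1 s) (cy g 1 s) (cz g 1 s)).
change (cx g 0 s) with (v1 (g s)) in A1, A2, A3.
change (cy g 0 s) with (v2 (g s)) in A1, A2, A3.
change (cz g 0 s) with (v3 (g s)) in A1, A2, A3.
rewrite A1, A2, A3.
unfold scal3, cross. unfold v1 at 4 5 6 7, v2 at 4 5 6 7, v3 at 4 5 6 7, mkR3. simpl fst. simpl snd.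
reflexivity.
Qed.
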